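(* Let $n\geq 5$, let $P=(Y,X,Z)$ be a path of length two in $AQ_n$, and let $U\in N_{AQ_n}(P)$. Then $|N_{AQ_n}(\{U,X,Y,Z\})|\geq 8n-31$. If moreover $Z=\overline{X}_n$, then $|N_{AQ_n}(\{U,X,Y,Z\})|\geq 8n-29$.
   Context: The $n$-dimensional augmented cube $AQ_n$ has vertex set $\{0,1\}^n$, vertices written as strings $X=x_nx_{n-1}\cdots x_1$. For $1\le i\le n$ let $X_i=x_n\cdots x_{i+1}\bar x_i x_{i-1}\cdots x_1$ (flip bit $i$) and $\overline{X}_i=x_n\cdots x_{i+1}\bar x_i\bar x_{i-1}\cdots\bar x_1$ (flip bits $i,\dots,1$), where $\bar x=1-x$. Two distinct vertices $X,Y$ are adjacent iff $Y=X_i$ for some $1\le i\le n$ or $Y=\overline{X}_i$ for some $2\le i\le n$. For a vertex set (or subgraph) $T$, $N_{AQ_n}(T)=\bigcup_{V\in T}N_{AQ_n}(V)\setminus T$, where $N_{AQ_n}(V)$ is the neighbor set of $V$. *)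

(* Defs.v *)
From mathcomp Require Import all_boot.
Set Implicit Arguments. Unset Strict Implicit. Unset Printing Implicit Defensive.

(* Vertices of AQ_n: binary strings x_n ... x_1, encoded as functions
   'I_n -> bool, where bit x_i (1 <= i <= n) is stored at index i-1. *)
Definition vtx (n : nat) := {ffun 'I_n -> bool}.

(* X_i : flip bit i (1-based). *)
Definition flip1 n (X : vtx n) (i : nat) : vtx n :=
  [ffun j : 'I_n => if j.+1 == i then ~~ X j else X j].

(* \overline{X}_i : flip bits i, i-1, ..., 1 (1-based). *)
Definition flipc n (X : vtx n) (i : nat) : vtx n :=
  [ffun j : 'I_n => if j.+1 <= i then ~~ X j else X j].

Definition AQadj n (X Y : vtx n) : bool :=
  (X != Y) &&
  ([exists i : 'I_n, Y == flip1 X i.+1] ||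
   [exists i : 'I_n, (2 <= i.+1) && (Y == flipc X i.+1)]).

Definition NAQ n (T : {set vtx n}) : {set vtx n} :=
  [set V | (V \notin T) && [exists W in T, AQadj W V]].

(* Main.v *)
Require Import Defs.
From mathcomp Require Import all_boot zify.
Set Implicit Arguments. Unset Strict Implicit. Unset Printing Implicit Defensive.

Definition low n (V : vtx n.+1) : vtx n := [ffun j => V (widen_ord (leqnSn n) j)].
Definition top n (V : vtx n.+1) : bool := V ord_max.

Lemma low_top_inj n (V W : vtx n.+1) : low V = low W -> top V = top W -> V = W.
Proof.
move=> Hl Ht; apply/ffunP => j.
case: (ltnP j n) => Hj.
  have -> : j = widen_ord (leqnSn n) (Ordinal Hj) by apply/val_inj.
  by have := congr1 (fun f : vtx n => f (Ordinal Hj)) Hl; rewrite !ffunE.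
have -> : j = ord_max by apply/val_inj => /=; have := ltn_ord j; lia.
exact: Ht.
Qed.

Lemma flipcK n (X : vtx n) i : flipc (flipc X i) i = X.
Proof. by apply/ffunP => j; rewrite !ffunE; case: ifP => H; rewrite ?H ?negbK. Qed.

Lemma low_flip1 n (V : vtx n.+1) (i : nat) : i < n -> low (flip1 V i.+1) = flip1 (low V) i.+1.
Proof. by move=> _; apply/ffunP => j; rewrite !ffunE. Qed.
Lemma low_flipc n (V : vtx n.+1) (i : nat) : i < n -> low (flipc V i.+1) = flipc (low V) i.+1.
Proof. by move=> _; apply/ffunP => j; rewrite !ffunE. Qed.
Lemma top_flip1 n (V : vtx n.+1) (i : nat) : i < n -> top (flip1 V i.+1) = top V.
Proof. by move=> H; rewrite /top ffunE /= eqSS gtn_eqF. Qed.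
Lemma top_flipc n (V : vtx n.+1) (i : nat) : i < n -> top (flipc V i.+1) = top V.
Proof. by move=> H; rewrite /top ffunE /= ltnS leqNgt H. Qed.
Lemma low_flip1_top n (V : vtx n.+1) : low (flip1 V n.+1) = low V.
Proof. by apply/ffunP => j; rewrite !ffunE /= eqSS ltn_eqF. Qed.
Lemma low_flipc_top n (V : vtx n.+1) : low (flipc V n.+1) = flipc (low V) n.
Proof. by apply/ffunP => j; rewrite !ffunE /= ltnS ltnW // ltn_ord. Qed.
Lemma top_flip1_top n (V : vtx n.+1) : top (flip1 V n.+1) = ~~ top V.
Proof. by rewrite /top ffunE /= eqxx. Qed.
Lemma top_flipc_top n (V : vtx n.+1) : top (flipc V n.+1) = ~~ top V.
Proof. by rewrite /top ffunE /= leqnn. Qed.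

Lemma adj_lift n (V : vtx n.+1) w : AQadj (low V) w ->
  exists V', [/\ AQadj V V', low V' = w & top V' = top V].
Proof.
case/andP => Hne /orP [/existsP [i /eqP Hi] | /existsP [i /andP [Hi2 /eqP Hi]]].
  exists (flip1 V i.+1); rewrite low_flip1 // top_flip1 // -Hi; split => //.
  apply/andP; split.
    by apply: contra Hne => /eqP E; rewrite Hi -low_flip1 // -E.
  by apply/orP; left; apply/existsP; exists (widen_ord (leqnSn n) i).
exists (flipc V i.+1); rewrite low_flipc // top_flipc // -Hi; split => //.
apply/andP; split.
  by apply: contra Hne => /eqP E; rewrite Hi -low_flipc // -E.
by apply/orP; right; apply/existsP; exists (widen_ord (leqnSn n) i); rewrite /= Hi2 eqxx.
Qed.

Lemma adj_top1 n (V : vtx n.+1) : AQadj V (flip1 V n.+1).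
Proof.
apply/andP; split.
  apply/eqP => E; have := congr1 (@top n) E; rewrite top_flip1_top.
  by case: (top V).
by apply/orP; left; apply/existsP; exists ord_max.
Qed.

Lemma adj_topc n (V : vtx n.+1) : AQadj V (flipc V n.+1).
Proof.
case: n V => [|n] V.
  have -> : flipc V 1 = flip1 V 1.
    by apply/ffunP => j; rewrite !ffunE; case: j => [[|j]] //.
  exact: adj_top1.
apply/andP; split.
  apply/eqP => E; have := congr1 (@top n.+1) E; rewrite top_flipc_top.
  by case: (top V).
by apply/orP; right; apply/existsP; exists ord_max; rewrite /= eqxx.
Qed.

Definition sl n (b : bool) (B : {set vtx n.+1}) : {set vtx n} :=
  (@low n) @: [set V in B | top V == b].

Definition q n (A : {set vtx n}) := #|[set w in A | flipc w n \in A]|.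

Lemma card_sl n b (B : {set vtx n.+1}) : #|sl b B| = #|[set V in B | top V == b]|.
Proof.
apply: card_in_imset => V W; rewrite !inE => /andP [_ /eqP HV] /andP [_ /eqP HW] E.
by apply: low_top_inj => //; rewrite HV HW.
Qed.

Lemma card_split n (B : {set vtx n.+1}) : #|B| = #|sl false B| + #|sl true B|.
Proof.
rewrite !card_sl -(cardsID [set V | top V] B) addnC.
have -> : B :&: [set V | top V] = [set V in B | top V == true].
  by apply/setP => V; rewrite !inE; case: (top V).
have -> : B :\: [set V | top V] = [set V in B | top V == false].
  by apply/setP => V; rewrite !inE; case: (top V); rewrite ?andbT ?andbF.
by [].
Qed.

Lemma slN n b (A : {set vtx n.+1}) : NAQ (sl b A) \subset sl b (NAQ A).
Proof.
apply/subsetP => w; rewrite inE => /andP [Hw /existsP [W /andP [HW Hadj]]].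
case/imsetP: HW => V; rewrite inE => /andP [HVA /eqP HVb] HWV.
rewrite HWV in Hadj; case: (adj_lift Hadj) => V' [HVV' Hl Ht].
apply/imsetP; exists V' => //; rewrite !inE Ht HVb eqxx andbT.
apply/andP; split.
  apply: contra Hw => HV'; apply/imsetP; exists V' => //.
  by rewrite inE HV' Ht HVb eqxx.
by apply/existsP; exists V; rewrite HVA.
Qed.

Lemma same_side n b (A : {set vtx n.+1}) : {in A, forall V, top V = b} ->
  sl b A :|: [set flipc w n | w in sl b A] \subset sl (~~ b) (NAQ A).
Proof.
move=> Hb; apply/subsetP => w; rewrite inE => /orP [].
  case/imsetP => V; rewrite inE => /andP [HVA _] ->.
  apply/imsetP; exists (flip1 V n.+1); last by rewrite low_flip1_top.
  rewrite !inE top_flip1_top Hb // eqxx andbT; apply/andP; split.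
    by apply/negP => H; have := Hb _ H; rewrite top_flip1_top Hb //; case: b {Hb}.
  by apply/existsP; exists V; rewrite HVA adj_top1.
case/imsetP => w' /imsetP [V]; rewrite inE => /andP [HVA _] -> ->.
apply/imsetP; exists (flipc V n.+1); last by rewrite low_flipc_top.
rewrite !inE top_flipc_top Hb // eqxx andbT; apply/andP; split.
  by apply/negP => H; have := Hb _ H; rewrite top_flipc_top Hb //; case: b {Hb}.
by apply/existsP; exists V; rewrite HVA adj_topc.
Qed.

Lemma card_union n (A : {set vtx n}) :
  #|A :|: [set flipc w n | w in A]| + q A = 2 * #|A|.
Proof.
have Hinj : injective (fun w : vtx n => flipc w n) by move=> x y /(congr1 (fun v => flipc v n)); rewrite !flipcK.
rewrite cardsU card_imset //.
have -> : A :&: [set flipc w n | w in A] = [set w in A | flipc w n \in A].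
  apply/setP => w; rewrite !inE; congr (_ && _); apply/imsetP/idP.
    by case=> x Hx ->; rewrite flipcK.
  by move=> H; exists (flipc w n) => //; rewrite flipcK.
rewrite /q; have := subset_leq_card (subsetIl A [set flipc w n | w in A]).
have -> : A :&: [set flipc w n | w in A] = [set w in A | flipc w n \in A].
  apply/setP => w; rewrite !inE; congr (_ && _); apply/imsetP/idP.
    by case=> x Hx ->; rewrite flipcK.
  by move=> H; exists (flipc w n) => //; rewrite flipcK.
move: (#|[set w in A | _]|) (#|A|) => k m; lia.
Qed.

Lemma q_same n b (A : {set vtx n.+1}) : {in A, forall V, top V = b} -> q A = 0.
Proof.
move=> Hb; apply/eqP; rewrite cards_eq0; apply/eqP/setP => V; rewrite !inE.
apply/negP => /andP [HV HV'].
by have := Hb _ HV'; rewrite top_flipc_top Hb //; case: b {Hb}.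
Qed.

Lemma q_le n (A : {set vtx n}) : q A <= #|A|.
Proof. by apply: subset_leq_card; apply/subsetP => w; rewrite inE => /andP []. Qed.

Definition P n (A : {set vtx n}) :=
  4 * #|A| * n + 2 * q A + 6 <= 2 * #|NAQ A| + 3 * #|A| ^ 2 + 5 * #|A|.

Lemma card_split' n b (B : {set vtx n.+1}) : #|B| = #|sl b B| + #|sl (~~ b) B|.
Proof. by rewrite (card_split B); case: b => //=; rewrite addnC. Qed.

Lemma sl_empty n b (A : {set vtx n.+1}) : {in A, forall V, top V = b} -> #|sl (~~ b) A| = 0.
Proof.
move=> Hb; rewrite card_sl; apply/eqP; rewrite cards_eq0; apply/eqP/setP => V.
rewrite !inE; apply/negP => /andP [HV /eqP]; rewrite Hb //; by case: b {Hb}.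
Qed.

Lemma step_same n b (A : {set vtx n.+1}) :
  (forall A' : {set vtx n}, 0 < #|A'| -> P A') ->
  {in A, forall V, top V = b} -> 0 < #|A| -> P A.
Proof.
move=> IH Hb HA.
have Hk : #|sl b A| = #|A| by rewrite (card_split' b A) sl_empty // addn0.
have HIH := IH (sl b A) ltac:(by rewrite Hk).
rewrite /P in HIH *; rewrite (q_same Hb) Hk in HIH *.
have H1 := subset_leq_card (slN b A).
have H2 := subset_leq_card (same_side Hb).
have H3 := card_union (sl b A).
have H4 := card_split' b (NAQ A).
rewrite Hk in H3.
move: HIH H1 H2 H3 H4.
move: (#|NAQ A|) (#|NAQ (sl b A)|) (#|sl b (NAQ A)|) (#|sl (~~ b) (NAQ A)|) (q (sl b A))
  (#|sl b A :|: _|) (#|A|) => N N' Sb Snb qb U k.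
nia.
Qed.

Lemma step_split n (A : {set vtx n.+1}) :
  (forall A' : {set vtx n}, 0 < #|A'| -> P A') ->
  0 < #|sl false A| -> 0 < #|sl true A| -> P A.
Proof.
move=> IH H0 H1.
have I0 := IH _ H0; have I1 := IH _ H1.
rewrite /P in I0 I1 *.
have S0 := subset_leq_card (slN false A).
have S1 := subset_leq_card (slN true A).
have C := card_split (NAQ A).
have CA := card_split A.
have Q := q_le A.
move: I0 I1 S0 S1 C CA Q H0 H1.
move: (#|NAQ A|) (#|NAQ (sl false A)|) (#|NAQ (sl true A)|) (#|sl false (NAQ A)|)
  (#|sl true (NAQ A)|) (q (sl false A)) (q (sl true A)) (q A) (#|sl false A|) (#|sl true A|) (#|A|)
  => N N0 N1 T0 T1 q0 q1 qA k0 k1 k.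
nia.
Qed.

Lemma in_sl n b (A : {set vtx n.+1}) V : V \in A -> top V = b -> low V \in sl b A.
Proof. by move=> HV Ht; apply/imsetP; exists V; rewrite // inE HV Ht eqxx. Qed.

Lemma key n (A : {set vtx n}) : 0 < #|A| -> P A.
Proof.
elim: n A => [|n IH] A HA.
  have := max_card A; rewrite card_ffun card_ord card_bool expn0 => H1.
  have := q_le A; rewrite /P.
  move: (q A) (#|NAQ A|) (#|A|) HA H1 => qa N k; nia.
case: (posnP #|sl false A|) => H0.
  apply: (@step_same n true) => // V HV; case Ht: (top V) => //.
  by have := in_sl HV Ht; rewrite (card0_eq H0).
case: (posnP #|sl true A|) => H1.
  apply: (@step_same n false) => // V HV; case Ht: (top V) => //.
  by have := in_sl HV Ht; rewrite (card0_eq H1).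
exact: step_split.
Qed.


Theorem lemma2p9 (n : nat) (X Y Z U : vtx n) :
  5 <= n ->
  (* P = (Y, X, Z) is a path of length two *)
  Y != Z -> AQadj Y X -> AQadj X Z ->
  (* U is in N_{AQ_n}(P) *)
  U \in NAQ [set Y; X; Z] ->
  (8 * n - 31 <= #|NAQ [set U; X; Y; Z]|) /\
  (Z = flipc X n -> 8 * n - 29 <= #|NAQ [set U; X; Y; Z]|).
Proof.
move=> Hn HYZ /andP [HYX _] /andP [HXZ _] HU.
have EA : [set U; X; Y; Z] = U |: (X |: (Y |: [set Z])).
  by apply/setP => v; rewrite !inE !orbA.
move: HU; rewrite inE => /andP [HU _]; move: HU; rewrite !inE => HU.
have HA : #|[set U; X; Y; Z]| = 4.
  rewrite EA !cardsU1 cards1 !inE.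
  move: HU HYZ HYX HXZ; rewrite !negb_or.
  move=> /andP [/andP [h1 h2] h3] h4 h5 h6; by rewrite h1 h2 h3 h4 h6 eq_sym h5.
have K := key (ltac:(by rewrite HA) : 0 < #|[set U; X; Y; Z]|).
rewrite /P HA in K.
split.
  move: K; move: (q [set U; X; Y; Z]) (#|NAQ [set U; X; Y; Z]|) => qa N; lia.
move=> HZ.
have Hq : 2 <= q [set U; X; Y; Z].
  rewrite /q; have <- : #|[set X; Z]| = 2 by rewrite cards2 HXZ.
  apply: subset_leq_card; apply/subsetP => w; rewrite !inE => /orP [] /eqP ->.
    by rewrite -HZ !eqxx !orbT.
  by rewrite HZ flipcK !eqxx !orbT.
move: K Hq; move: (q [set U; X; Y; Z]) (#|NAQ [set U; X; Y; Z]|) => qa N; lia.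
Qed.
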